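(* Any algorithm that estimates the maximum path cover size of an $n$-vertex graph within a constant multiplicative factor requires $\Omega(n^2)$ queries in the adjacency matrix model.
   Context: A path cover is a collection of vertex-disjoint simple paths; its size is the total number of edges, and the maximum path cover size is the maximum over all path covers. Estimating within a constant multiplicative factor $\gamma\in(0,1]$ means outputting $\tilde{\rho}$ with $\gamma\rho\le\tilde{\rho}\le\rho$. In the adjacency matrix model the algorithm may query, for any pair of vertices, whether they are adjacent. *)

(* Defs.v *)
From HB Require Import structures.
From mathcomp Require Import all_boot all_order all_algebra.
Set Implicit Arguments. Unset Strict Implicit. Unset Printing Implicit Defensive.
Import Order.TTheory GRing.Theory Num.Theory.

Definition simple_graph (n : nat) (G : rel 'I_n) : Prop :=
  symmetric G /\ irreflexive G.

Definition simple_path (n : nat) (G : rel 'I_n) (p : seq 'I_n) : bool :=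
  if p is x :: s then path G x s && uniq p else false.

Definition path_cover (n : nat) (G : rel 'I_n) (P : seq (seq 'I_n)) : bool :=
  all (simple_path G) P && uniq (flatten P).

Definition pc_size (n : nat) (P : seq (seq 'I_n)) : nat :=
  \sum_(p <- P) (size p).-1.

Definition is_max_pc_size (n : nat) (G : rel 'I_n) (rho : nat) : Prop :=
  (exists P, path_cover G P /\ pc_size P = rho) /\
  (forall P, path_cover G P -> (pc_size P <= rho)%N).

(* Deterministic adaptive algorithms in the adjacency matrix model:
   decision trees whose internal nodes query whether u and v are adjacent,
   and whose leaves output an estimate. *)
Inductive dtree (R : Type) (n : nat) : Type :=
| Leaf : R -> dtree R n
| Query : 'I_n -> 'I_n -> dtree R n -> dtree R n -> dtree R n.

Fixpoint run (R : Type) (n : nat) (G : rel 'I_n) (t : dtree R n) : R :=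
  match t with
  | Leaf r => r
  | Query u v t1 t2 => if G u v then run G t1 else run G t2
  end.

Fixpoint num_queries (R : Type) (n : nat) (G : rel 'I_n) (t : dtree R n) : nat :=
  match t with
  | Leaf _ => 0
  | Query u v t1 t2 => (if G u v then num_queries G t1 else num_queries G t2).+1
  end.

Definition good_estimate (R : realFieldType) (n : nat) (gamma : R)
  (G : rel 'I_n) (r : R) : Prop :=
  forall rho, is_max_pc_size G rho -> (gamma * rho%:R <= r)%R /\ (r <= rho%:R)%R.

(* A randomized algorithm: a probability distribution p over a finite family
   T of deterministic decision trees. *)
Definition distribution (R : realFieldType) (I : finType) (p : I -> R) : Prop :=
  (forall i, (0 <= p i)%R) /\ (\sum_i p i = 1)%R.

Definition succeeds_with_prob (R : realFieldType) (n : nat) (gamma q : R)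
  (I : finType) (T : I -> dtree R n) (p : I -> R) (G : rel 'I_n) : Prop :=
  exists S : {set I},
    (forall i, i \in S -> good_estimate gamma G (run G (T i))) /\
    (q <= \sum_(i in S) p i)%R.

(* Main.v *)
Require Import Defs.
From HB Require Import structures.
From mathcomp Require Import all_boot all_order all_algebra.
From mathcomp Require Import ring lra zify.
From Stdlib Require Import Classical.
Import Order.TTheory GRing.Theory Num.Theory.
Set Implicit Arguments. Unset Strict Implicit. Unset Printing Implicit Defensive.

Lemma max_exists (Q : nat -> Prop) k0 B :
  Q k0 -> (forall k, Q k -> (k <= B)%N) ->
  exists m, Q m /\ forall k, Q k -> (k <= m)%N.
Proof.
move=> Qk0 HB.
suff H : forall d, (forall k, Q k -> (k <= k0 + d)%N) ->
    exists m, Q m /\ forall k, Q k -> (k <= m)%N.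
  by apply: (H B) => k /HB Hk; apply: leq_trans Hk (leq_addl k0 B).
elim=> [|d IH] Hd; first by exists k0; split => // k /Hd; rewrite addn0.
case: (classic (Q (k0 + d.+1))) => [Qd|nQd]; first by exists (k0 + d.+1).
apply: IH => k Qk; have := Hd k Qk; rewrite leq_eqVlt addnS ltnS.
case/orP => [/eqP Ek|//]; exfalso; apply: nQd; by rewrite addnS -Ek.
Qed.

Lemma pc_size_flatten n (P : seq (seq 'I_n)) : (pc_size P <= size (flatten P))%N.
Proof.
rewrite /pc_size; elim: P => [|p P IH]; first by rewrite big_nil.
by rewrite big_cons /= size_cat leq_add // leq_pred.
Qed.

Lemma pc_size_le n (G : rel 'I_n) P : path_cover G P -> (pc_size P <= n)%N.
Proof.
case/andP=> _ U; apply: leq_trans (pc_size_flatten P) _.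
by rewrite -(card_uniqP U) -[X in (_ <= X)%N]card_ord max_card.
Qed.

Lemma max_pc_exists n (G : rel 'I_n) : exists rho, is_max_pc_size G rho.
Proof.
have h1 : exists P, path_cover G P /\ pc_size P = 0%N.
  by exists [::]; rewrite /pc_size big_nil.
have h2 : forall k, (exists P, path_cover G P /\ pc_size P = k) -> (k <= n)%N.
  by move=> k [P [HP <-]]; exact: pc_size_le HP.
have [m [[P [HP Pm]] Hm]] := max_exists h1 h2.
exists m; split; first by exists P.
by move=> Q HQ; apply: Hm; exists Q.
Qed.

Fixpoint ql (R : Type) n (t : dtree R n) : seq ('I_n * 'I_n) :=
  match t with Leaf _ => [::] | Query u v _ t2 => (u, v) :: ql t2 end.

Definition G0 n : rel 'I_n := fun _ _ => false.

Lemma size_ql R n (t : dtree R n) : size (ql t) = num_queries (@G0 n) t.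
Proof. by elim: t => //= u v t1 _ t2 ->. Qed.

Lemma run_agree R n (G : rel 'I_n) (t : dtree R n) :
  (forall x, x \in ql t -> G x.1 x.2 = false) -> run G t = run (@G0 n) t.
Proof.
elim: t => //= u v t1 _ t2 IH H.
rewrite (H (u,v)) ?mem_head //; apply: IH => x Hx; apply: H.
by rewrite in_cons Hx orbT.
Qed.

Definition Ge n (u v : 'I_n) : rel 'I_n :=
  fun a b => ((a == u) && (b == v)) || ((a == v) && (b == u)).

Lemma G0_simple n : simple_graph (@G0 n).
Proof. by split. Qed.

Lemma Ge_simple n (u v : 'I_n) : u != v -> simple_graph (Ge u v).
Proof.
move=> uv; split; first by move=> a b; rewrite /Ge orbC; congr (_ || _); rewrite andbC.
move=> a; rewrite /Ge; apply/negbTE; apply/negP.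
by case/orP => /andP [/eqP -> /eqP E]; move: uv; rewrite E eqxx.
Qed.

Lemma G0_max n rho : is_max_pc_size (@G0 n) rho -> rho = 0%N.
Proof.
case=> [[P [HP <-]] _]; rewrite /pc_size big1_seq // => p /andP [_ Hp].
case/andP: HP => /allP /(_ p Hp).
by case: p {Hp} => [|x [|y s]].
Qed.

Lemma Ge_max n (u v : 'I_n) rho : u != v -> is_max_pc_size (Ge u v) rho -> (1 <= rho)%N.
Proof.
move=> uv [_ H].
have := H [:: [:: u; v]]; rewrite /pc_size big_cons big_nil; apply.
by rewrite /path_cover /= /simple_path /= /Ge !eqxx /= in_cons in_nil orbF uv.
Qed.

Lemma key (R : realFieldType) (gamma : R) n (t : dtree R n) (u v : 'I_n) :
  (0 < gamma)%R -> u != v ->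
  good_estimate gamma (@G0 n) (run (@G0 n) t) ->
  good_estimate gamma (Ge u v) (run (Ge u v) t) ->
  ((u,v) \in ql t) || ((v,u) \in ql t).
Proof.
move=> g0 uv H0 He; apply/negPn/negP; rewrite negb_or => /andP [n1 n2].
have E : run (Ge u v) t = run (@G0 n) t.
  apply: run_agree => [[a b]] Hab /=; rewrite /Ge; apply/negbTE; apply/negP.
  by case/orP => /andP [/eqP Ea /eqP Eb]; subst a b; [rewrite Hab in n1 | rewrite Hab in n2].
have [r0 Hr0] := max_pc_exists (@G0 n).
have [re Hre] := max_pc_exists (Ge u v).
have := H0 _ Hr0; rewrite (G0_max Hr0) => -[_ h1].
have := He _ Hre; rewrite E => -[h2 _].
have h3 : (0 < gamma * re%:R)%R by rewrite mulr_gt0 // ltr0n (Ge_max uv Hre).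
lra.
Qed.

Lemma ind_sum (R : realFieldType) (I : finType) (S : {set I}) (p : I -> R) :
  (\sum_(i in S) p i = \sum_i (i \in S)%:R * p i)%R.
Proof.
by rewrite big_mkcond; apply: eq_bigr => i _; case: (i \in S); rewrite ?mul1r ?mul0r.
Qed.

Theorem lemma11p7 (R : realFieldType) (gamma : R) :
  (0 < gamma)%R -> (gamma <= 1)%R ->
  exists c : R, (0 < c)%R /\
  exists N : nat, forall n : nat, (N <= n)%N ->
  forall (I : finType) (T : I -> dtree R n) (p : I -> R),
    distribution p ->
    (forall G : rel 'I_n, simple_graph G ->
       succeeds_with_prob gamma (2%:R / 3%:R)%R T p G) ->
    exists (G : rel 'I_n) (i : I), simple_graph G /\
      (c * (n ^ 2)%:R <= (num_queries G (T i))%:R)%R.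
Proof.
Local Open Scope ring_scope.
move=> g0 g1; exists (1 / 24%:R)%R; split; first by lra.
exists 2%N => n n2 I T p [p0 p1] Hsucc.
pose q i := num_queries (@G0 n) (T i).
case: (boolP [exists i, ((1 / 24%:R) * (n ^ 2)%:R <= (q i)%:R :> R)%R]) => [/existsP [i Hi]|Hnot].
  by exists (@G0 n), i; split => //; exact: G0_simple.
exfalso.
have Hall : forall i, ((q i)%:R < (1 / 24%:R) * (n ^ 2)%:R :> R)%R.
  by move/existsPn: Hnot => H i; rewrite ltNge; exact: H i.
have [S0 [HS0 pS0]] := Hsucc _ (@G0_simple n).
pose B i := [set e : 'I_n * 'I_n | (e \in ql (T i)) || ((e.2, e.1) \in ql (T i))].
have C1 : forall e : 'I_n * 'I_n, e.1 != e.2 ->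
    (1 / 3%:R <= \sum_i (e \in B i)%:R * p i)%R.
  move=> [u v] /= uv.
  have [Se [HSe pSe]] := Hsucc _ (Ge_simple uv).
  have pt : forall i, ((i \in S0)%:R * p i + (i \in Se)%:R * p i - p i
                      <= ((u, v) \in B i)%:R * p i)%R.
    move=> i; have := p0 i.
    case: (boolP (i \in S0)) => h0; case: (boolP (i \in Se)) => he /=.
    - have -> : (u, v) \in B i by rewrite inE /=; exact: key g0 uv (HS0 i h0) (HSe i he).
      by rewrite !mul1r; lra.
    - by case: (_ \in B i); rewrite ?mul1r ?mul0r; lra.
    - by case: (_ \in B i); rewrite ?mul1r ?mul0r; lra.
    - by case: (_ \in B i); rewrite ?mul1r ?mul0r; lra.
  have := @ler_sum _ _ (index_enum I) xpredT _ _ (fun i _ => pt i).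
  rewrite sumrB big_split /= -!ind_sum p1.
  move: pS0 pSe; lra.
pose D := [set e : 'I_n * 'I_n | e.1 == e.2].
pose E := ~: D.
have cardD : (#|D| <= n)%N.
  pose s := [seq (x, x) | x <- enum 'I_n].
  have hs : size s = n by rewrite size_map size_enum_ord.
  apply: (@leq_trans #|s|); last by rewrite -[X in (_ <= X)%N]hs card_size.
  apply: subset_leq_card; apply/subsetP.
  move=> [a b]; rewrite inE /= => /eqP <-; apply/mapP; exists a => //.
  by rewrite mem_enum.
have cardE : (n * n <= #|E| + n)%N.
  have := cardsC D; rewrite card_prod card_ord => H.
  by rewrite -H addnC leq_add2l.
have cardB : forall i, (#|B i| <= 2 * q i)%N.
  move=> i; pose s := ql (T i) ++ map (fun e => (e.2, e.1)) (ql (T i)).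
  have hs : (size s = 2 * q i)%N by rewrite size_cat size_map size_ql /q; lia.
  apply: (@leq_trans #|s|); last by rewrite -hs card_size.
  apply: subset_leq_card; apply/subsetP.
  move=> e; rewrite inE mem_cat => /orP [->//|h]; apply/orP; right.
  by apply/mapP; exists (e.2, e.1) => //; case: e {h}.
have C2 : (#|E|%:R * (1 / 3%:R) <= \sum_(e in E) \sum_i (e \in B i)%:R * p i)%R.
  rewrite mulrC mulr_natr -sumr_const; apply: ler_sum => e eD; apply: C1.
  by move: eD; rewrite !inE.
have C3 : (\sum_(e in E) \sum_i (e \in B i)%:R * p i <= \sum_i p i * (#|B i|%:R))%R.
  rewrite exchange_big /=; apply: ler_sum => i _.
  rewrite -mulr_suml mulrC ler_wpM2l //.
  have -> : (#|B i|%:R = \sum_e (e \in B i)%:R :> R)%R.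
    by rewrite -sumr_const big_mkcond; apply: eq_bigr => e _; case: (e \in B i).
  rewrite [X in (X <= _)%R]big_mkcond /=; apply: ler_sum => e _.
  by case: (e \in E); case: (e \in B i).
have C4 : (\sum_i p i * (#|B i|%:R) <= 2%:R * ((1 / 24%:R) * (n ^ 2)%:R))%R.
  have -> : (2%:R * ((1 / 24%:R) * (n ^ 2)%:R) = \sum_i p i * (2%:R * ((1 / 24%:R) * (n ^ 2)%:R)) :> R)%R.
    by rewrite -mulr_suml p1 !mul1r.
  apply: ler_sum => i _; rewrite ler_wpM2l //.
  apply: le_trans (_ : (2 * q i)%:R <= _)%R; first by rewrite ler_nat.
  by rewrite natrM ler_wpM2l ?ler0n // ltW.
have {}cardE : ((n%:R * n%:R : R) <= #|E|%:R + n%:R)%R.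
  by rewrite -natrM -natrD ler_nat.
have nge : (2%:R <= n%:R :> R)%R by rewrite ler_nat.
move: cardE nge C2 C3 C4; rewrite natrX; nra.
Qed.
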